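(* Let $(A,\mathfrak m)$ be a Cohen–Macaulay local ring of dimension $d\ge2$ with infinite residue field, let $x_1,\dots,x_d$ be an $A$-superficial sequence, $J=(x_1,\dots,x_d)$, and $(B,\mathfrak n)=(A/(x_1),\mathfrak m/(x_1))$. For an ideal $I$ of $A$ write $\overline I$ for its image in $B$. Since $\overline{\widetilde{\mathfrak m^i}}\subseteq\widetilde{\mathfrak n^i}$, there are natural maps $\eta_i:\widetilde{\mathfrak m^{i+1}}/J\widetilde{\mathfrak m^i}\to\widetilde{\mathfrak n^{i+1}}/\overline J\,\widetilde{\mathfrak n^i}$, $p+J\widetilde{\mathfrak m^i}\mapsto \overline p+\overline J\widetilde{\mathfrak n^i}$, for all $i\ge0$. Then: (1) if $\overline{\widetilde{\mathfrak m^s}}=\widetilde{\mathfrak n^s}$ for some $s$, then $\eta_s$ is injective; (2) if $\overline{\widetilde{\mathfrak m^j}}=\widetilde{\mathfrak n^j}$ for $j=s,s+1$, then $\eta_s$ is bijective.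
   Context: An element $x\in\mathfrak m$ is $A$-superficial if there are $c,n_0$ with $(\mathfrak m^{n+1}:x)\cap\mathfrak m^c=\mathfrak m^n$ for all $n\ge n_0$; a sequence $x_1,\dots,x_r$ is $A$-superficial if $x_1$ is $A$-superficial and $x_i$ is $A/(x_1,\dots,x_{i-1})$-superficial for $i\ge2$. For a local ring $(R,\mathfrak q)$ of positive depth, the Ratliff–Rush closure is $\widetilde{\mathfrak q^i}=\bigcup_{k\ge1}(\mathfrak q^{i+k}:\mathfrak q^k)$ for $i\ge1$, with $\widetilde{\mathfrak q^0}=R$. *)

(* Defs.v *)
From mathcomp Require Import all_boot all_order all_algebra.
Set Implicit Arguments. Unset Strict Implicit. Unset Printing Implicit Defensive.
Import GRing.Theory.
Local Open Scope ring_scope.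

Section IdealDefs.
Variable R : comNzRingType.
Implicit Types (I K m : R -> Prop) (s : seq R).

Definition is_ideal I :=
  I 0 /\ (forall a b, I a -> I b -> I (a + b)) /\ (forall r a, I a -> I (r * a)).

Definition prime_ideal P := is_ideal P /\ ~ P 1 /\ (forall a b, P (a * b) -> P a \/ P b).

Definition gen s : R -> Prop :=
  fun x => exists c : 'I_(size s) -> R, x = \sum_(i < size s) c i * s`_i.

Definition idadd I K : R -> Prop := fun x => exists a b, I a /\ K b /\ x = a + b.
Definition idmul I K : R -> Prop :=
  fun x => exists (n : nat) (a b : 'I_n -> R),
    (forall i, I (a i)) /\ (forall i, K (b i)) /\ x = \sum_(i < n) a i * b i.

Fixpoint idpow I (n : nat) : R -> Prop :=
  match n with 0 => fun _ => True | n'.+1 => idmul I (idpow I n') end.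

(* Ratliff--Rush closure of I^i : union over k >= 1 of (I^(i+k) : I^k); = R for i = 0 *)
Definition rr I (i : nat) : R -> Prop :=
  match i with
  | 0 => fun _ => True
  | _ => fun a => exists k, (0 < k)%N /\ forall y, idpow I k y -> idpow I (i + k) (a * y)
  end.

Definition noetherian :=
  forall I, is_ideal I -> exists s, forall x, I x <-> gen s x.

Definition local_ring m :=
  noetherian /\ is_ideal m /\ ~ m 1 /\ (forall a, ~ m a -> exists b, a * b = 1).

Definition prime_chain (P : nat -> R -> Prop) (n : nat) :=
  forall i, (i <= n)%N -> prime_ideal (P i) /\
    ((i < n)%N -> (forall a, P i a -> P i.+1 a) /\ exists a, P i.+1 a /\ ~ P i a).

Definition krull_dim (d : nat) :=
  (exists P, prime_chain P d) /\ forall P, ~ prime_chain P d.+1.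

Definition regular_seq m s :=
  (forall i, (i < size s)%N -> m s`_i) /\
  (forall i, (i < size s)%N -> forall a, gen (take i s) (s`_i * a) -> gen (take i s) a).

(* Cohen--Macaulay local ring: depth (= sup of lengths of m-regular sequences) equals dim *)
Definition cohen_macaulay m :=
  local_ring m /\ exists d, krull_dim d /\ exists s, size s = d /\ regular_seq m s.

Definition infinite_residue_field m :=
  exists f : nat -> R, forall i j, i <> j -> ~ m (f i - f j).

(* x is (R/K)-superficial, expressed through preimages in R of ideals of R/K:
   the image of m^n in R/K has preimage m^n + K. *)
Definition superficial_mod K m (x : R) :=
  m x /\ exists c n0 : nat, forall n, (n0 <= n)%N -> forall a,
    (idadd (idpow m n.+1) K (x * a) /\ idadd (idpow m c) K a) <-> idadd (idpow m n) K a.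

Definition superficial_seq m s :=
  forall i, (i < size s)%N -> superficial_mod (gen (take i s)) m s`_i.

End IdealDefs.

Definition img (A B : Type) (f : A -> B) (I : A -> Prop) : B -> Prop :=
  fun b => exists a, I a /\ f a = b.

Section Eta.
Variables (A B : comNzRingType) (pi : A -> B) (m : A -> Prop) (x : seq A).
Let J := gen x.
Let n := img pi m.

(* eta_i : RR(m^(i+1)) / J RR(m^i) -> RR(n^(i+1)) / Jbar RR(n^i),  p |-> pi p *)
Definition eta_injective (i : nat) :=
  forall p, rr m i.+1 p -> idmul (img pi J) (rr n i) (pi p) -> idmul J (rr m i) p.

Definition eta_surjective (i : nat) :=
  forall q, rr n i.+1 q -> exists p, rr m i.+1 p /\ idmul (img pi J) (rr n i) (q - pi p).
End Eta.

(* Main.v *)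
Require Import Defs.
From mathcomp Require Import all_boot all_order all_algebra.
From mathcomp Require Import zify.
Local Open Scope ring_scope.
Import GRing.Theory.
Set Implicit Arguments.

Section Aux.
Variable R : comNzRingType.
Implicit Types (I K m : R -> Prop).

Lemma idmul0 I K : I 0 -> idmul I K 0.
Proof.
move=> I0; exists 0%N, (fun _ => 0), (fun _ => 0); split; first by [].
split; first by case. by rewrite big_ord0.
Qed.

Lemma idmul_add I K a b : idmul I K a -> idmul I K b -> idmul I K (a + b).
Proof.
move=> [n1 [a1 [b1 [H1 [H2 ->]]]]] [n2 [a2 [b2 [H3 [H4 ->]]]]].
exists (n1 + n2)%N,
  (fun i => match split i with inl j => a1 j | inr j => a2 j end),
  (fun i => match split i with inl j => b1 j | inr j => b2 j end).
split; first by move=> i; case: split.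
split; first by move=> i; case: split.
rewrite big_split_ord /=; congr (_ + _); apply: eq_bigr => i _.
  by rewrite (unsplitK (inl i)).
by rewrite (unsplitK (inr i)).
Qed.

Lemma idmul_mul I K r a : is_ideal I -> idmul I K a -> idmul I K (r * a).
Proof.
move=> [_ [_ HI]] [n [a1 [b1 [H1 [H2 ->]]]]].
exists n, (fun i => r * a1 i), b1; split; first by move=> i; apply: HI.
split; first by []. by rewrite mulr_sumr; apply: eq_bigr => i _; rewrite mulrA.
Qed.

Lemma idmul_ideal I K : is_ideal I -> is_ideal (idmul I K).
Proof.
move=> HI; split; first by apply: idmul0; case: HI.
split; first exact: idmul_add. by move=> r a; apply: idmul_mul.
Qed.

Lemma idmul1 I K u v : I u -> K v -> idmul I K (u * v).
Proof.
move=> Hu Hv; exists 1%N, (fun _ => u), (fun _ => v); split; first by [].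
split; first by []. by rewrite big_ord1.
Qed.

Lemma idmul_sub I K a : is_ideal K -> idmul I K a -> K a.
Proof.
move=> [K0 [KD KM]] [n [a1 [b1 [H1 [H2 ->]]]]].
apply: big_ind => //; by move=> i _; apply: KM.
Qed.

Lemma idpow_ideal m n : is_ideal m -> is_ideal (idpow m n).
Proof.
move=> Hm; case: n => [|n] /=; first by split.
exact: idmul_ideal.
Qed.

Lemma idpow_shift m k N t : is_ideal m ->
  (forall y, idpow m k y -> idpow m N (t * y)) ->
  forall j y, idpow m (j + k) y -> idpow m (j + N) (t * y).
Proof.
move=> Hm H; elim=> [|j IH] y //=.
  by rewrite !add0n; apply: H.
move=> [n [a [b [Ha [Hb ->]]]]].
rewrite mulr_sumr; elim/big_ind: _.
- by apply: idmul0; case: Hm.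
- exact: idmul_add.
move=> i _; rewrite mulrCA; apply: idmul1 => //; exact: IH.
Qed.

Lemma idpow_mono m j c y : is_ideal m -> idpow m (j + c) y -> idpow m c y.
Proof.
move=> Hm; elim: j y => [|j IH] y /=; first by rewrite add0n.
move=> Hy; apply: (idmul_sub (I:=m) (idpow_ideal c Hm)).
move: Hy => [n [a [b [Ha [Hb ->]]]]]; exists n, a, b; split=> //; split=> //.
by move=> i; apply: IH.
Qed.

Lemma rr_ideal m s : is_ideal m -> is_ideal (rr m s.+1).
Proof.
move=> Hm; split.
  exists 1%N; split=> // y _; rewrite mul0r.
  by case: (idpow_ideal (s.+1 + 1) Hm).
split.
  move=> a b [k1 [k1p Ha]] [k2 [k2p Hb]]; exists (k1 + k2)%N; split; first lia.
  move=> y Hy; rewrite mulrDl.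
  have [_ [HD _]] := idpow_ideal (s.+1 + (k1 + k2)) Hm; apply: HD.
    have := @idpow_shift _ _ _ _ Hm Ha k2.
    have -> : (k2 + (s.+1 + k1) = s.+1 + (k1 + k2))%N by lia.
    apply; have -> : (k2 + k1 = k1 + k2)%N by lia. done.
  have := @idpow_shift _ _ _ _ Hm Hb k1.
  have -> : (k1 + (s.+1 + k2) = s.+1 + (k1 + k2))%N by lia.
  by apply.
move=> r a [k [kp Ha]]; exists k; split=> // y Hy.
rewrite -mulrA; have [_ [_ HM]] := idpow_ideal (s.+1 + k) Hm; apply: HM.
exact: Ha.
Qed.

Lemma rr_mul m s a r : is_ideal m -> m a -> rr m s r -> rr m s.+1 (a * r).
Proof.
move=> Hm ma; case: s => [|s] /=.
  move=> _; exists 1%N; split=> // y Hy.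
  rewrite -mulrA /=; apply: idmul1 => //.
  by have [_ [_ HM]] := idpow_ideal 1 Hm; apply: HM.
move=> [k [kp Hr]]; exists k; split=> // y Hy.
rewrite -mulrA ?addSn /=; apply: idmul1 => //; exact: Hr.
Qed.

Lemma gen_nth (s : seq R) i : (i < size s)%N -> gen s s`_i.
Proof.
move=> Hi; exists (fun j : 'I_(size s) => (j == Ordinal Hi)%:R).
rewrite (bigD1 (Ordinal Hi)) //= eqxx mul1r big1 ?addr0 //.
by move=> j /negbTE ->; rewrite mul0r.
Qed.

Lemma gen_in_m m (s : seq R) a : is_ideal m ->
  (forall i, (i < size s)%N -> m s`_i) -> gen s a -> m a.
Proof.
move=> [m0 [mD mM]] Hs [c ->]; elim/big_ind: _ => //.
by move=> i _; apply: mM; apply: Hs.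
Qed.

Lemma gen_nil a : gen (R:=R) [::] a <-> a = 0.
Proof.
split; first by move=> [c ->]; rewrite big_ord0.
by move=> ->; exists (fun _ => 0); rewrite big_ord0.
Qed.

Lemma idadd_nil I a : is_ideal I -> (idadd I (gen (R:=R) [::]) a <-> I a).
Proof.
move=> HI; split.
  by move=> [u [v [Hu [/gen_nil -> ->]]]]; rewrite addr0.
by move=> Ha; exists a, 0; split=> //; split; [apply/gen_nil|rewrite addr0].
Qed.

End Aux.

Theorem mainTheorem7 (A : comNzRingType) (m : A -> Prop) (d : nat) (x : seq A)
  (B : comNzRingType) (pi : {rmorphism A -> B}) :
  cohen_macaulay m -> krull_dim A d -> (2 <= d)%N -> infinite_residue_field m ->
  size x = d -> superficial_seq m x ->
  (forall b : B, exists a : A, pi a = b) ->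
  (forall a : A, pi a = 0 <-> gen [:: head 0 x] a) ->
  (forall s : nat,
     (forall b, img pi (rr m s) b <-> rr (img pi m) s b) ->
     eta_injective pi m x s) /\
  (forall s : nat,
     (forall b, img pi (rr m s) b <-> rr (img pi m) s b) ->
     (forall b, img pi (rr m s.+1) b <-> rr (img pi m) s.+1 b) ->
     eta_injective pi m x s /\ eta_surjective pi m x s).
Proof.
move=> [[_ [Hm _]] _] _ d2 _ sx Hsup _ Hker.
have x0 : (0 < size x)%N by lia.
have xm : forall i, (i < size x)%N -> m x`_i by move=> i /Hsup [].
have Jm : forall a, gen x a -> m a by move=> a; apply: gen_in_m.
have inj : forall s, (forall b, img pi (rr m s) b <-> rr (img pi m) s b) ->
    eta_injective pi m x s.
  move=> s Hs p hp [N [u [v [Hu [Hv Hp]]]]].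
  have : forall i, exists jr : A * A, gen x jr.1 /\ rr m s jr.2 /\
      pi jr.1 = u i /\ pi jr.2 = v i.
    move=> i; have [j [Jj <-]] := Hu i; have /Hs [r [Hr <-]] := Hv i.
    by exists (j, r).
  move=> /fin_all_exists [f Hf].
  pose q := \sum_(i < N) (f i).1 * (f i).2.
  have Hq : idmul (gen x) (rr m s) q.
    exists N, (fun i => (f i).1), (fun i => (f i).2).
    by split; [move=> i; case: (Hf i)|split; [move=> i; case: (Hf i) => _ []|]].
  have : pi (p - q) = 0.
    apply/eqP; rewrite rmorphB Hp rmorph_sum /= subr_eq0; apply/eqP/eq_bigr => i _.
    by rewrite rmorphM; case: (Hf i) => _ [_ [-> ->]].
  move=> /Hker [cc]; rewrite big_ord1 /= => Epq.
  set c0 := cc ord0 in Epq.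
  have -> : p = q + x`_0 * c0 by rewrite nth0 mulrC -Epq addrC subrK.
  apply: idmul_add => //; apply: idmul1; first exact: gen_nth.
  destruct s as [|s]; first by [].
  have Hrr := rr_ideal s.+1 Hm.
  have hx : rr m s.+2 (x`_0 * c0).
    have -> : x`_0 * c0 = p - q by rewrite Epq nth0 mulrC.
    have [_ [RD RM]] := Hrr.
    apply: (RD) => //; rewrite -mulN1r; apply: (RM).
    rewrite /q; elim/big_ind: _; [by case: Hrr| exact: RD|].
    move=> i _; case: (Hf i) => [Jj [Hr _]]; apply: rr_mul => //; exact: Jm.
  have [_ [c [n0 Hs0]]] := Hsup 0%N x0; rewrite take0 in Hs0.
  move: hx => [k [kp Hk]].
  exists (c + n0 + k)%N; split; first lia.
  move=> y Hy.
  have H1 := @idpow_shift _ _ _ _ _ Hm Hk _ _ Hy.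
  have H2 : idpow m c (c0 * y).
    have [_ [_ HM]] := idpow_ideal c Hm; apply: HM.
    apply: (@idpow_mono _ m (n0 + k)%N) => //.
    by have -> : (n0 + k + c = c + n0 + k)%N by lia.
  have Hn : (n0 <= s.+1 + (c + n0 + k))%N by lia.
  have := (Hs0 _ Hn (c0 * y)).1; rewrite !idadd_nil; try exact: idpow_ideal.
  apply; split => //.
  have -> : ((s.+1 + (c + n0 + k)).+1 = c + n0 + (s.+2 + k))%N by lia.
  by rewrite mulrA.
have Hpre : forall s, (forall b, img pi (rr m s) b <-> rr (img pi m) s b) ->
    eta_injective pi m x s by exact: inj.
split; first exact: inj.
move=> s H1 H2; split; first exact: inj.
move=> q /H2 [p [Hp <-]]; exists p; split=> //.
rewrite subrr; apply: idmul0; exists 0; split; last exact: rmorph0.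
by exists (fun _ => 0); rewrite big1 // => i _; rewrite mul0r.
Qed.
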